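(* Let $(X,D)$ be an $\mathcal{F}$-metric space with respect to $(f,\alpha)\in\mathcal{F}\times[0,\infty)$. Then for every $a\in X$ and every $k>0$ there exists $r>0$ such that for all $b\in X$ with $D(a,b)\ge k$ and all $c\in X$, one has $D(a,c)+D(b,c)\ge r$.
   Context: $\mathcal{F}$ denotes the class of functions $f:(0,\infty)\to\mathbb{R}$ such that ($\mathcal{F}_1$) $f$ is non-decreasing, and ($\mathcal{F}_2$) for every sequence $(t_n)\subseteq(0,\infty)$, $\lim_n t_n=0$ iff $\lim_n f(t_n)=-\infty$. An $\mathcal{F}$-metric on a non-empty set $X$ is a map $D:X\times X\to[0,\infty)$ for which there exists $(f,\alpha)\in\mathcal{F}\times[0,\infty)$ such that: (D1) $D(x,y)=0$ iff $x=y$; (D2) $D(x,y)=D(y,x)$ for all $x,y$; (D3) for all $(x,y)\in X\times X$, every integer $N\ge2$ and every $u_1,\dots,u_N\in X$ with $u_1=x$, $u_N=y$: if $D(x,y)>0$ then $f(D(x,y))\le f\big(\sum_{i=1}^{N-1}D(u_i,u_{i+1})\big)+\alpha$. *)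

(* Defs.v *)
From Stdlib Require Import Reals List.
Open Scope R_scope.

(* f : (0,oo) -> R is modelled as a total function R -> R whose values
   outside (0,oo) are irrelevant: all conditions only refer to positive
   arguments. *)
Definition F_class (f : R -> R) : Prop :=
  (forall s t, 0 < s -> s < t -> f s <= f t) /\
  (forall t : nat -> R, (forall n, 0 < t n) ->
     (Un_cv t 0 <-> cv_infty (fun n => - f (t n)))).

Fixpoint chain_sum {X : Type} (D : X -> X -> R) (x : X) (l : list X) : R :=
  match l with
  | nil => 0
  | y :: l' => D x y + chain_sum D y l'
  end.

(* D is an F-metric on X w.r.t. (f, alpha). A chain u_1 = x, ..., u_N = y
   with N >= 2 is represented as x :: mid ++ [y]. *)
Definition is_F_metric {X : Type} (D : X -> X -> R) (f : R -> R) (alpha : R)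
  : Prop :=
  F_class f /\ 0 <= alpha /\
  (forall x y, 0 <= D x y) /\
  (forall x y, D x y = 0 <-> x = y) /\
  (forall x y, D x y = D y x) /\
  (forall x y (mid : list X), 0 < D x y ->
     f (D x y) <= f (chain_sum D x (mid ++ y :: nil)) + alpha).

(* Main.v *)
Require Import Defs.
From Stdlib Require Import Reals List Lra Lia Classical ClassicalEpsilon.
Open Scope R_scope.

Theorem mainTheorem5 (X : Type) (D : X -> X -> R) (f : R -> R) (alpha : R)
  (HD : is_F_metric D f alpha) :
  forall (a : X) (k : R), 0 < k ->
    exists r : R, 0 < r /\
      forall b c : X, D a b >= k -> D a c + D b c >= r.
Proof.
  destruct HD as [[Hmono HF2] [Ha [Hnn [Hz [Hsym Htri]]]]].
  intros a k Hk.
  apply NNPP; intro Hno.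
  assert (Hex : forall n : nat, exists p : X * X,
    D a (fst p) >= k /\ D a (snd p) + D (fst p) (snd p) < / INR (S n)).
  { intro n. apply NNPP; intro Hn. apply Hno.
    exists (/ INR (S n)). split.
    - apply Rinv_0_lt_compat. apply lt_0_INR. lia.
    - intros b c Hb. apply Rnot_lt_ge. intro Hlt. apply Hn.
      exists (b, c). simpl. auto. }
  set (p := fun n => proj1_sig (constructive_indefinite_description _ (Hex n))).
  assert (Hp : forall n, D a (fst (p n)) >= k /\
     D a (snd (p n)) + D (fst (p n)) (snd (p n)) < / INR (S n)).
  { intro n. unfold p. destruct (constructive_indefinite_description _ (Hex n)); auto. }
  set (t := fun n => D a (snd (p n)) + D (fst (p n)) (snd (p n))).
  assert (Htpos : forall n, 0 < t n).
  { intro n. destruct (Hp n) as [H1 _]. unfold t.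
    pose proof (Hnn a (snd (p n))). pose proof (Hnn (fst (p n)) (snd (p n))).
    destruct (Rle_lt_or_eq_dec 0 _ H) as [h|h]; [lra|].
    destruct (Rle_lt_or_eq_dec 0 _ H0) as [h'|h']; [lra|].
    symmetry in h, h'. apply Hz in h. apply Hz in h'.
    rewrite <- h' in h. rewrite h in H1.
    assert (D (fst (p n)) (fst (p n)) = 0) by (apply Hz; reflexivity). lra. }
  assert (Hcv : Un_cv t 0).
  { intros eps Heps.
    destruct (archimed (/ eps)) as [Hup _].
    assert (Hpos : 0 < IZR (up (/ eps))).
    { pose proof (Rinv_0_lt_compat _ Heps). lra. }
    destruct (IZN (up (/ eps))) as [N HN].
    { apply le_IZR. lra. }
    exists N. intros n Hn. unfold Rdist. rewrite Rminus_0_r.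
    rewrite Rabs_pos_eq by (left; apply Htpos).
    destruct (Hp n) as [_ H2]. fold t in H2.
    apply Rlt_le_trans with (/ INR (S n)); auto.
    rewrite HN, <- INR_IZR_INZ in Hup.
    assert (INR N <= INR n) by (apply le_INR; lia).
    rewrite S_INR.
    replace eps with (/ / eps) by (field; lra).
    apply Rinv_le_contravar. apply Rinv_0_lt_compat; lra. lra. }
  apply (HF2 t Htpos) in Hcv.
  destruct (Hcv (alpha - f k + 1)) as [N HN].
  specialize (HN N (le_n N)). simpl in HN.
  destruct (Hp N) as [H1 _].
  assert (Hpos : 0 < D a (fst (p N))) by lra.
  pose proof (Htri a (fst (p N)) (snd (p N) :: nil) Hpos) as Hc.
  simpl in Hc. rewrite Rplus_0_r in Hc.
  rewrite (Hsym (snd (p N)) (fst (p N))) in Hc.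
  fold (t N) in Hc.
  assert (f k <= f (D a (fst (p N)))).
  { destruct (Rge_gt_or_eq_dec _ _ H1) as [h|h].
    - apply Hmono; lra.
    - rewrite h; lra. }
  lra.
Qed.
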